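(* Let $m,n\ge 0$ be integers. Every clique $C$ in ${\rm SR}(m,n)$ is of one of the following three types: 1. All pairs of distinct vertices of $C$ differ exactly in coordinates $j$ and $k$, for a fixed pair $j\ne k$; then $|C|\le n+1$. 2. $C=\{x+ae_i : i\in I\}$, where $a$ is an integer with $1\le a\le n$, $x\in\mathbb{N}^m$ has coordinate sum $n-a$, and $I\subseteq\{1,\dots,m\}$; then $|C|\le m$. 3. $C=\{x-ae_i : i\in I\}$, where $a$ is an integer with $a\ge 1$, $x\in\mathbb{N}^m$ has coordinate sum $n+a$, $I\subseteq\{1,\dots,m\}$, and $x_i\ge a$ for all $i\in I$; then $|C|\le m$.
   Context: $\mathbb{N}=\{0,1,2,\dots\}$. ${\rm SR}(m,n)$ is the graph whose vertices are the vectors in $\mathbb{N}^m$ with coordinate sum $n$, two vertices being adjacent when they differ in precisely two coordinate positions. $e_i$ is the $i$-th standard unit vector. A clique is a set of pairwise adjacent vertices. *)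

(* Defs.v *)
From mathcomp Require Import all_boot.
Set Implicit Arguments. Unset Strict Implicit. Unset Printing Implicit Defensive.

(* Vectors of N^m are finite functions 'I_m -> nat (coordinates indexed 0..m-1). *)
Notation vec m := {ffun 'I_m -> nat}.

Definition csum m (x : vec m) : nat := \sum_(i < m) x i.

Definition is_vertex m n (x : vec m) : bool := csum x == n.

Definition diffset m (x y : vec m) : {set 'I_m} := [set i | x i != y i].

Definition adj m (x y : vec m) : bool := #|diffset x y| == 2.

(* A clique of SR(m,n), given as a duplicate-free list of its vertices
   (every clique is finite since the vertex set is finite). *)
Definition is_clique m n (C : seq (vec m)) : Prop :=
  uniq C /\ (forall x, x \in C -> is_vertex n x) /\
  (forall x y, x \in C -> y \in C -> x != y -> adj x y).

Definition addu m (x : vec m) (a : nat) (i : 'I_m) : vec m :=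
  [ffun j => x j + (if j == i then a else 0)].
Definition subu m (x : vec m) (a : nat) (i : 'I_m) : vec m :=
  [ffun j => x j - (if j == i then a else 0)].

Definition type1 m n (C : seq (vec m)) : Prop :=
  (forall x y u v, x \in C -> y \in C -> u \in C -> v \in C ->
     x != y -> u != v -> diffset x y = diffset u v)
  /\ size C <= n.+1.

Definition type2 m n (C : seq (vec m)) : Prop :=
  (exists (a : nat) (x : vec m) (I : {set 'I_m}),
     [/\ 1 <= a <= n, csum x = n - a &
         C =i [seq addu x a i | i in I]])
  /\ size C <= m.

Definition type3 m n (C : seq (vec m)) : Prop :=
  (exists (a : nat) (x : vec m) (I : {set 'I_m}),
     [/\ 1 <= a, csum x = n + a, (forall i, i \in I -> a <= x i) &
         C =i [seq subu x a i | i in I]])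
  /\ size C <= m.

(* Main.v *)
Require Import Defs.
From mathcomp Require Import all_boot.
From mathcomp Require Import zify.
From Stdlib Require Import Classical_Prop.
Set Implicit Arguments.

Lemma coord_le m (x : vec m) i : x i <= csum x.
Proof. by rewrite /csum (bigD1 i) //= leq_addr. Qed.

Lemma csum1 m (u w : vec m) t : (forall i, i != t -> u i = w i) ->
  csum u + w t = csum w + u t.
Proof.
move=> H; rewrite /csum (bigD1 t) //= [in RHS](bigD1 t) //=.
rewrite (eq_bigr (fun i => w i)); last by move=> i /H.
by rewrite addnC [RHS]addnC !addnA [_ + u _]addnC.
Qed.

Lemma csum2 m (u w : vec m) j k : j != k ->
  (forall i, i != j -> i != k -> u i = w i) ->
  csum u + (w j + w k) = csum w + (u j + u k).
Proof.
move=> jk H; rewrite /csum (bigD1 j) //= [in RHS](bigD1 j) //=.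
rewrite (bigD1 k) 1?eq_sym //= [in RHS](bigD1 k) 1?eq_sym //=.
have E : \sum_(i < m | (i != j) && (i != k)) u i = \sum_(i < m | (i != j) && (i != k)) w i.
  by apply: eq_bigr => i /andP[H1 H2]; apply: H.
rewrite E. move: (\sum_(i < m | (i != j) && (i != k)) w i) => S. lia.
Qed.

Definition s3 {m} (a b c : 'I_m) : {set 'I_m} := a |: (b |: [set c]).

Lemma card3 m (a b c : 'I_m) : a != b -> a != c -> b != c -> #|s3 a b c| = 3.
Proof.
move=> ab ac bc; rewrite /s3 !cardsU1 cards1 !inE negb_or ab ac bc.
by [].
Qed.

Lemma not3 m (y z : vec m) a b c : a != b -> a != c -> b != c ->
  y a <> z a -> y b <> z b -> y c <> z c -> adj y z -> False.
Proof.
move=> ab ac bc Ha Hb Hc /eqP Hadj.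
have S: s3 a b c \subset diffset y z.
  apply/subsetP => i; rewrite /s3 !inE => /or3P[] /eqP->; apply/eqP; auto.
have := subset_leq_card S; rewrite card3 // Hadj. by [].
Qed.

Lemma adjP m n (x y : vec m) : is_vertex n x -> is_vertex n y -> adj x y ->
  exists j k d, [/\ j != k, 0 < d, d <= x j, y j = x j - d & y k = x k + d] /\
     (forall i, i != j -> i != k -> y i = x i) /\ diffset x y = [set j; k].
Proof.
move=> /eqP Hx /eqP Hy /cards2P [j [k [jk HD]]].
have Hag: forall i, i != j -> i != k -> y i = x i.
  move=> i ij ik; have: i \notin diffset x y by rewrite HD !inE negb_or ij ik.
  by rewrite inE negbK => /eqP.
have Hs := @csum2 _ y x j k jk Hag. rewrite Hx Hy in Hs.
have Dj: j \in diffset x y by rewrite HD !inE eqxx.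
have Dk: k \in diffset x y by rewrite HD !inE eqxx orbT.
rewrite !inE in Dj Dk.
move/eqP: Dj => Dj; move/eqP: Dk => Dk.
case: (leqP (x j) (y j)) => hj.
- exists k, j, (x k - y k); split; first split; rewrite 1?eq_sym //; try lia.
  split; first by move=> i ik ij; apply: Hag.
  by rewrite HD setUC.
- exists j, k, (x j - y j); split; first split; rewrite //; try lia.
Qed.

Lemma gen1 m (u v w : vec m) t : (forall i, i != t -> v i = w i) -> v t != w t -> adj u v ->
  [\/ u t = v t /\ #|diffset u w| = 3, u t = w t /\ #|diffset u w| = 1 |
      [/\ u t != v t, u t != w t & #|diffset u w| = 2]].
Proof.
move=> Hvw Ht /eqP Huv.
case: (eqVneq (u t) (v t)) => e1.
  have E: diffset u w = t |: diffset u v.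
    apply/setP=> i; rewrite !inE; case: (eqVneq i t) => [->|it] /=.
      by rewrite e1 Ht.
    by rewrite Hvw.
  apply: Or31; split=> //; rewrite E cardsU1 Huv inE e1 eqxx. by [].
case: (eqVneq (u t) (w t)) => e2.
  have E: diffset u v = t |: diffset u w.
    apply/setP=> i; rewrite !inE; case: (eqVneq i t) => [->|it] /=.
      by rewrite e1.
    by rewrite Hvw.
  apply: Or32; split=> //. move: Huv; rewrite E cardsU1 inE e2 eqxx /=.
  by case.
have E: diffset u w = diffset u v.
  apply/setP=> i; rewrite !inE; case: (eqVneq i t) => [->|it] /=.
    by rewrite e1 e2.
  by rewrite Hvw.
by apply: Or33; split=> //; rewrite E Huv.
Qed.

Lemma star_gen m n (w u vj vk vl : vec m) j k l :
  j != k -> j != l -> k != l ->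
  (forall i, i != j -> vj i = w i) -> vj j != w j ->
  (forall i, i != k -> vk i = w i) -> vk k != w k ->
  (forall i, i != l -> vl i = w i) -> vl l != w l ->
  is_vertex n u -> is_vertex n vj ->
  (u = vj \/ adj u vj) -> (u = vk \/ adj u vk) -> (u = vl \/ adj u vl) ->
  (exists i, forall i', i' != i -> u i' = w i') \/
  (u k + u l = w k + w l /\ u k = vk k /\ u l = vl l).
Proof.
move=> jk jl kl Hj nj Hk nk Hl nl /eqP Hu /eqP Hvj [->|Aj]; first by left; exists j.
case=> [->|Ak]; first by left; exists k.
case=> [->|Al]; first by left; exists l.
have Gj := gen1 u vj w j Hj nj Aj; have Gk := gen1 u vk w k Hk nk Ak; have Gl := gen1 u vl w l Hl nl Al.
have [c3|c3] := eqVneq #|diffset u w| 3.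
  have ej : u j = vj j by case: Gj => [[]|[_ e]|[_ _ e]] //; rewrite c3 in e.
  have ek : u k = vk k by case: Gk => [[]|[_ e]|[_ _ e]] //; rewrite c3 in e.
  have el : u l = vl l by case: Gl => [[]|[_ e]|[_ _ e]] //; rewrite c3 in e.
  have S: s3 j k l \subset diffset u w.
    apply/subsetP => i; rewrite /s3 !inE => /or3P[] /eqP->.
    - by rewrite ej.
    - by rewrite ek.
    - by rewrite el.
  have ED: s3 j k l == diffset u w by rewrite eqEcard S c3 card3.
  move/eqP: ED => ED.
  have Hout: forall i, i != j -> i != k -> i != l -> u i = w i.
    move=> i ij ik il; apply/eqP; apply/negPn; apply/negP => ne.
    have: i \in diffset u w by rewrite inE.
    by rewrite -ED /s3 !inE (negbTE ij) (negbTE ik) (negbTE il).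
  right; split; last by [].
  have H2: forall i, i != k -> i != l -> u i = vj i.
    move=> i ik il; case: (eqVneq i j) => [->|ij]; first by [].
    by rewrite Hj // Hout.
  have := @csum2 _ u vj k l kl H2. rewrite Hu Hvj (Hj k) 1?eq_sym // (Hj l) 1?eq_sym //.
  lia.
have [c1|c1] := eqVneq #|diffset u w| 1.
  left; move/eqP/cards1P: c1 => [i Hi]; exists i => i' ii.
  have: i' \notin diffset u w by rewrite Hi inE.
  by rewrite inE negbK => /eqP.
exfalso.
have ej : u j != w j by case: Gj => [[_ e]|[_ e]|[_ e _]] //; rewrite e in c3 c1.
have ek : u k != w k by case: Gk => [[_ e]|[_ e]|[_ e _]] //; rewrite e in c3 c1.
have el : u l != w l by case: Gl => [[_ e]|[_ e]|[_ e _]] //; rewrite e in c3 c1.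
have S: s3 j k l \subset diffset u w.
  by apply/subsetP => i; rewrite /s3 !inE => /or3P[] /eqP->.
have := subset_leq_card S; rewrite card3 //.
by case: Gj => [[_ e]|[_ e]|[_ _ e]]; [rewrite e eqxx in c3 | rewrite e eqxx in c1 | rewrite e].
Qed.

Ltac clear_ordneq := repeat match goal with
  | H : is_true (~~ (?a == ?b)) |- _ =>
      let T := type of a in
      lazymatch eval hnf in T with nat => fail | _ => clear H end
  | H : is_true (_ == _) |- _ => clear H
  | H : diffset _ _ = _ |- _ => clear H
  | H : forall i, _ |- _ => clear H
  end.
Ltac nlia := clear_ordneq; lia.

Lemma triple m n (x y z : vec m) : is_vertex n x -> is_vertex n y -> is_vertex n z ->
  adj x y -> adj x z -> adj y z -> diffset x y != diffset x z ->
  (exists a (w : vec m) (j k l : 'I_m), [/\ 0 < a, j != k, j != l & k != l] /\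
     [/\ x = addu w a j, y = addu w a k & z = addu w a l]) \/
  (exists a (w : vec m) (j k l : 'I_m), [/\ 0 < a, j != k, j != l & k != l] /\
     [/\ a <= w j, a <= w k & a <= w l] /\
     [/\ x = subu w a j, y = subu w a k & z = subu w a l]).
Proof.
move=> Vx Vy Vz Axy Axz Ayz ND.
have [j [k [d [[jk d0 dx yj yk] [yo Dy]]]]] := adjP n x y Vx Vy Axy.
have [p [q [e [[pq e0 ex zp zq] [zo Dz]]]]] := adjP n x z Vx Vz Axz.
case: (eqVneq p j) => [pj|pj].
  subst p.
  case: (eqVneq q k) => [qk|qk].
    by subst q; rewrite Dy Dz eqxx in ND.
  have qj : q != j by rewrite eq_sym.
  case: (eqVneq d e) => [de|de]; last first.
    exfalso; apply: (not3 y z j k q) Ayz => //; rewrite 1?eq_sym //.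
    - rewrite yj zp; nlia.
    - rewrite yk zo 1?eq_sym //; nlia.
    - rewrite yo // zq; nlia.
  subst e.
  left; exists d, (subu x d j), j, k, q; split; first by split=> //; rewrite eq_sym.
  split; apply/ffunP => i; rewrite !ffunE.
  - case: (eqVneq i j) => [->|ij]; first by rewrite ?eqxx /= subnK.
    by rewrite ?(negbTE ij) subn0 addn0.
  - case: (eqVneq i j) => [->|ij]; first by rewrite ?eqxx /= (negbTE jk) addn0 yj.
    rewrite ?(negbTE ij) subn0; case: (eqVneq i k) => [->|ik]; first by rewrite yk.
    by rewrite addn0 yo.
  - case: (eqVneq i j) => [->|ij]; first by rewrite ?eqxx /= (negbTE pq) addn0 zp.
    rewrite ?(negbTE ij) subn0; case: (eqVneq i q) => [->|iq]; first by rewrite zq.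
    by rewrite addn0 zo.
case: (eqVneq p k) => [pk|pk].
  subst p.
  case: (eqVneq q j) => [qj|qj].
    by subst q; rewrite Dy Dz setUC eqxx in ND.
  have jq : j != q by rewrite eq_sym.
  have qk : q != k by rewrite eq_sym.
  exfalso; apply: (not3 y z j k q) Ayz => //.
  - rewrite yj (zo j jk jq); nlia.
  - rewrite yk zp; nlia.
  - rewrite (yo q qj qk) zq; nlia.
have jp : j != p by rewrite eq_sym.
have kp : k != p by rewrite eq_sym.
case: (eqVneq q j) => [qj|qj].
  subst q.
  exfalso; apply: (not3 y z j k p) Ayz => //.
  - rewrite yj zq; nlia.
  - have kq : k != j by rewrite eq_sym.
    rewrite yk (zo k kp kq); nlia.
  - rewrite (yo p pj pk) zp; nlia.
case: (eqVneq q k) => [qk|qk]; last first.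
  have jq : j != q by rewrite eq_sym.
  have kq : k != q by rewrite eq_sym.
  exfalso; apply: (not3 y z j k p) Ayz => //.
  - rewrite yj (zo j jp jq); nlia.
  - rewrite yk (zo k kp kq); nlia.
  - rewrite (yo p pj pk) zp; nlia.
subst q.
case: (eqVneq d e) => [de|de]; last first.
  exfalso; apply: (not3 y z j k p) Ayz => //.
  - rewrite yj (zo j jp jk); nlia.
  - rewrite yk zq; nlia.
  - rewrite (yo p pj pk) zp; nlia.
subst e.
right; exists d, (addu x d k), k, j, p; split; first by split=> //; rewrite eq_sym.
split.
  by rewrite !ffunE eqxx (negbTE jk) (negbTE pk) !addn0; split; nlia.
split; apply/ffunP => i; rewrite !ffunE.
- case: (eqVneq i k) => [->|ik]; first by rewrite ?eqxx /= addnK.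
  by rewrite ?(negbTE ik) subn0 addn0.
- case: (eqVneq i j) => [->|ij]; first by rewrite ?eqxx /= (negbTE jk) addn0 yj.
  rewrite ?(negbTE ij) subn0; case: (eqVneq i k) => [->|ik]; first by rewrite yk.
  by rewrite addn0 yo.
- case: (eqVneq i p) => [->|ip]; first by rewrite ?eqxx /= (negbTE pk) addn0 zp.
  rewrite ?(negbTE ip) subn0; case: (eqVneq i k) => [->|ik]; first by rewrite zq.
  by rewrite addn0 zo.
Qed.

Lemma fin2 m n (C : seq (vec m)) a (w : vec m) j k l : is_clique n C -> 0 < a ->
  j != k -> j != l -> k != l ->
  addu w a j \in C -> addu w a k \in C -> addu w a l \in C -> type2 n C.
Proof.
move=> [Cu [Cv Ca]] a0 jk jl kl Xj Xk Xl.
have Hv: forall t, (forall i, i != t -> addu w a t i = w i).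
  by move=> t i it; rewrite ffunE (negbTE it) addn0.
have Hn: forall t, addu w a t t != w t.
  by move=> t; rewrite ffunE eqxx; apply/eqP; nlia.
have Sw: csum w + a = n.
  have := csum1 _ _ _ (Hv j); move/eqP: (Cv _ Xj) => ->; rewrite ffunE eqxx; nlia.
have Hall: forall u, u \in C -> exists i, u = addu w a i.
  move=> u uC.
  have adjor: forall v, v \in C -> u = v \/ adj u v.
    move=> v vC; case: (eqVneq u v) => [->|uv]; [by left | right; exact: Ca].
  have [[i Hi]|[Hs [ek el]]] := @star_gen _ n w u (addu w a j) (addu w a k) (addu w a l) j k l jk jl kl
     (Hv j) (Hn j) (Hv k) (Hn k) (Hv l) (Hn l) (Cv _ uC) (Cv _ Xj)
     (adjor _ Xj) (adjor _ Xk) (adjor _ Xl).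
    exists i; have := csum1 _ _ _ Hi; move/eqP: (Cv _ uC) => -> Hs.
    apply/ffunP => i'; rewrite ffunE; case: (eqVneq i' i) => [->|ii].
      rewrite ?eqxx; move: Hs; rewrite -Sw -addnA => /addnI <-; exact: addnC.
    by rewrite ?(negbTE ii) addn0 Hi.
  by exfalso; rewrite ek el !ffunE !eqxx in Hs; nlia.
set I := [set i | addu w a i \in C].
have E: C =i [seq addu w a i | i in I].
  move=> u; apply/idP/idP => [uC|/imageP [i]].
    have [i Eu] := Hall u uC; rewrite Eu in uC *.
    by apply/imageP; exists i => //; rewrite inE.
  by rewrite inE => iC ->.
split.
  exists a, w, I; split=> //; first (apply/andP; split; nlia).
  nlia.
have sub: {subset C <= [seq addu w a i | i in I]} by move=> u; rewrite E.
apply: leq_trans (uniq_leq_size Cu sub) _.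
by rewrite size_image -[X in _ <= X]card_ord max_card.
Qed.

Lemma fin3 m n (C : seq (vec m)) a (w : vec m) j k l : is_clique n C -> 0 < a ->
  j != k -> j != l -> k != l -> a <= w j -> a <= w k -> a <= w l ->
  subu w a j \in C -> subu w a k \in C -> subu w a l \in C -> type3 n C.
Proof.
move=> [Cu [Cv Ca]] a0 jk jl kl aj ak al Xj Xk Xl.
have Hv: forall t, (forall i, i != t -> subu w a t i = w i).
  by move=> t i it; rewrite ffunE (negbTE it) subn0.
have Hn: forall t, a <= w t -> subu w a t t != w t.
  by move=> t at'; rewrite ffunE eqxx; apply/eqP; nlia.
have Sw: csum w = n + a.
  have := csum1 _ _ _ (Hv j); move/eqP: (Cv _ Xj) => ->; rewrite ffunE eqxx; nlia.
have Hall: forall u, u \in C -> exists i, u = subu w a i.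
  move=> u uC.
  have adjor: forall v, v \in C -> u = v \/ adj u v.
    move=> v vC; case: (eqVneq u v) => [->|uv]; [by left | right; exact: Ca].
  have [[i Hi]|[Hs [ek el]]] := @star_gen _ n w u (subu w a j) (subu w a k) (subu w a l) j k l jk jl kl
     (Hv j) (Hn j aj) (Hv k) (Hn k ak) (Hv l) (Hn l al) (Cv _ uC) (Cv _ Xj)
     (adjor _ Xj) (adjor _ Xk) (adjor _ Xl).
    exists i; have := csum1 _ _ _ Hi; move/eqP: (Cv _ uC) => -> Hs.
    apply/ffunP => i'; rewrite ffunE; case: (eqVneq i' i) => [->|ii].
      rewrite ?eqxx; move: Hs; rewrite Sw -addnA => /addnI ->; by rewrite addKn.
    by rewrite ?(negbTE ii) subn0 Hi.
  by exfalso; rewrite ek el !ffunE !eqxx in Hs; nlia.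
set I := [set i | subu w a i \in C].
have E: C =i [seq subu w a i | i in I].
  move=> u; apply/idP/idP => [uC|/imageP [i]].
    have [i Eu] := Hall u uC; rewrite Eu in uC *.
    by apply/imageP; exists i => //; rewrite inE.
  by rewrite inE => iC ->.
split.
  exists a, w, I; split=> //.
  move=> i; rewrite inE => iC.
  have := csum1 _ _ _ (Hv i); move/eqP: (Cv _ iC) => ->; rewrite ffunE eqxx; nlia.
have sub: {subset C <= [seq subu w a i | i in I]} by move=> u; rewrite E.
apply: leq_trans (uniq_leq_size Cu sub) _.
by rewrite size_image -[X in _ <= X]card_ord max_card.
Qed.

Lemma diffset_sym m (x y : vec m) : diffset x y = diffset y x.
Proof. by apply/setP => i; rewrite !inE eq_sym. Qed.

Unset Implicit Arguments.

Theorem lemma9 (m n : nat) (C : seq {ffun 'I_m -> nat}) :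
  is_clique n C -> type1 n C \/ type2 n C \/ type3 n C.
Proof.
move=> Hc; have Hc' := Hc; case: Hc => [Cu [Cv Ca]].
case: (classic (exists x y z, [/\ x \in C, y \in C, z \in C, x != y & x != z] /\
                    y != z /\ diffset x y != diffset x z)).
  case=> x [y [z [[xC yC zC xy xz] [yz ND]]]].
  have Axy := Ca _ _ xC yC xy; have Axz := Ca _ _ xC zC xz; have Ayz := Ca _ _ yC zC yz.
  case: (triple n x y z (Cv _ xC) (Cv _ yC) (Cv _ zC) Axy Axz Ayz ND) =>
    [[a [w [j [k [l [[a0 jk jl kl] [ex ey ez]]]]]]]|
     [a [w [j [k [l [[a0 jk jl kl] [[aj ak al] [ex ey ez]]]]]]]]].
    right; left; apply: (@fin2 _ n C a w j k l Hc' a0 jk jl kl); by rewrite -?ex -?ey -?ez.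
  right; right; apply: (@fin3 _ n C a w j k l Hc' a0 jk jl kl aj ak al); by rewrite -?ex -?ey -?ez.
move=> NE.
have Heq: forall x y z, x \in C -> y \in C -> z \in C -> x != y -> x != z ->
    diffset x y = diffset x z.
  move=> x y z xC yC zC xy xz; case: (eqVneq y z) => [->|yz]; first by [].
  case: (eqVneq (diffset x y) (diffset x z)) => // ne; exfalso; apply: NE.
  by exists x, y, z.
have Hpair: forall x y u v, x \in C -> y \in C -> u \in C -> v \in C ->
    x != y -> u != v -> diffset x y = diffset u v.
  move=> x y u v xC yC uC vC xy uv.
  case: (eqVneq x u) => [xu|xu]; first by subst u; apply: Heq.
  rewrite (Heq x y u) // diffset_sym; apply: Heq => //; by rewrite eq_sym.
left; split; first exact: Hpair.
case: (leqP (size C) 1) => [h|h]; first by apply: leq_trans h _.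
set d0 : vec m := [ffun => 0].
have s0 : 0 < size C by apply: leq_trans h.
have x0C := mem_nth d0 s0; have y0C := mem_nth d0 h.
have x0y0 : nth d0 C 0 != nth d0 C 1 by rewrite nth_uniq.
have [j [k [d [[jk _ _ _ _] [_ Dy]]]]] :=
  adjP n _ _ (Cv _ x0C) (Cv _ y0C) (Ca _ _ x0C y0C x0y0).
have inj: {in C &, injective (fun u : vec m => u j)}.
  move=> u v uC vC /= e; apply/eqP; apply/negP => /negP uv.
  have: j \in diffset u v by rewrite -(Hpair _ _ _ _ x0C y0C uC vC x0y0 uv) Dy !inE eqxx.
  by rewrite inE e eqxx.
rewrite -(size_map (fun u : vec m => u j)).
have -> : n.+1 = size (iota 0 n.+1) by rewrite size_iota.
apply: uniq_leq_size; first by rewrite map_inj_in_uniq.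
move=> _ /mapP [u uC ->]; rewrite mem_iota /= add0n ltnS.
by have := coord_le u j; move/eqP: (Cv _ uC) => ->.
Qed.
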